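(* Let $r\geq1$ be odd, $m\geq 3$, $n=(r+1)m$, let $u$ be an integer with $\gcd(u,2^m-1)=1$, let $\alpha$ be a primitive element of $\mathbb{F}_{2^{rm}}$, and let $0\leq s,l\leq 2^{rm}-2$ be integers. For $0\le k\le 2^{rm}-2$ let $\Delta_k=\{\alpha^i\mid k\leq i\leq k+2^{rm-1}-1\}$. Let $F\colon\mathbb{F}_{2^{rm}}\times\mathbb{F}_{2^m}\to\mathbb{F}_2$ be the Boolean function with $$\mathrm{supp}(F)=\{(\gamma y^u,y)\mid y\in\mathbb{F}_{2^m}^*,\ \gamma\in\Delta_s\}\cup\{(\gamma,0)\mid\gamma\in\Delta_l\}.$$ Then the bivariate representation of $F$ over $\mathbb{F}_{2^{rm}}\times\mathbb{F}_{2^m}$ is $$F(x,y)=\sum_{\substack{i=1\\(2^m-1)\nmid i}}^{2^{rm}-2}\alpha^{-is}(1+\alpha^{-i})^{2^{rm-1}-1}x^iy^{2^m-1-\overline{ui}}+\sum_{j=1}^{\frac{2^{rm}-1}{2^m-1}-1}\alpha^{-(2^m-1)js}\bigl(1+\alpha^{-(2^m-1)j}\bigr)^{2^{rm-1}-1}x^{(2^m-1)j}y^{2^m-1}$$ $$\qquad+\sum_{i=1}^{2^{rm}-2}\alpha^{-il}(1+\alpha^{-i})^{2^{rm-1}-1}x^i(1+y^{2^m-1}),$$ where $\overline{ui}$ denotes the reduction of $ui$ modulo $2^m-1$ in $\{0,1,\dots,2^m-2\}$. Consequently $\deg F=n-1$.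
   Context: $\mathbb{F}_{2^{rm}}\times\mathbb{F}_{2^m}$ is viewed as an $n$-dimensional $\mathbb{F}_2$-vector space ($\mathbb{F}_{2^m}\subseteq\mathbb{F}_{2^{rm}}$). The bivariate representation of a Boolean function on $\mathbb{F}_{2^{rm}}\times\mathbb{F}_{2^m}$ is the unique polynomial $\sum_{i=0}^{2^{rm}-1}\sum_{j=0}^{2^m-1}c_{i,j}x^iy^j$ with $c_{i,j}\in\mathbb{F}_{2^{rm}}$ agreeing with the function everywhere. $\deg F$ is the algebraic degree of $F$ (degree of its algebraic normal form in $n$ binary coordinates). *)

(* Defs.v *)
From HB Require Import structures.
From mathcomp Require Import all_boot all_order all_algebra all_field.
Set Implicit Arguments. Unset Strict Implicit. Unset Printing Implicit Defensive.
Import Order.TTheory GRing.Theory Num.Theory.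
Local Open Scope ring_scope.

(* L plays the role of F_{2^{rm}}; the subfield F_{2^m} is {y | y^(2^m) = y}. *)
Definition inSub (L : finFieldType) (m : nat) (y : L) : bool := y ^+ (2 ^ m) == y.

Definition inDelta (L : finFieldType) (r m : nat) (alpha : L) (k : nat) (g : L) : bool :=
  [exists i : 'I_(2 ^ (r * m) * 2), (k <= i <= k + 2 ^ (r * m).-1 - 1)%N && (g == alpha ^+ i)].

Definition Fsupp (L : finFieldType) (r m : nat) (u : int) (alpha : L) (s l : nat)
  (x y : L) : bool :=
  [exists y' : L, exists g : L,
     [&& inSub m y', y' != 0, inDelta r m alpha s g & (x, y) == (g * y' ^ u, y')]]
  || [exists g : L, inDelta r m alpha l g && ((x, y) == (g, 0))].

Definition bivF (L : finFieldType) (r m : nat) (u : int) (alpha : L) (s l : nat)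
  (x y : L) : L :=
  let q := (2 ^ m - 1)%N in
  let N := (2 ^ (r * m))%N in
  let e := (2 ^ (r * m).-1 - 1)%N in
  \sum_(1 <= i < N.-1 | ~~ (q %| i)%N)
      alpha ^- (i * s) * (1 + alpha ^- i) ^+ e * x ^+ i
        * y ^+ (q - `|((u * i%:Z) %% q%:Z)%Z|)%N
  + \sum_(1 <= j < (N.-1 %/ q)%N)
      alpha ^- (q * j * s) * (1 + alpha ^- (q * j)) ^+ e * x ^+ (q * j) * y ^+ q
  + \sum_(1 <= i < N.-1)
      alpha ^- (i * l) * (1 + alpha ^- i) ^+ e * x ^+ i * (1 + y ^+ q).

(* Algebraic degree of a Boolean function on F_2^n via its algebraic normal form:
   g(x) = sum_u a_u x^u with a_u = sum_{x <= u} g(x) (Moebius transform). *)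
Definition anf_coef (n : nat) (g : 'rV['F_2]_n -> 'F_2) (v : 'rV['F_2]_n) : 'F_2 :=
  \sum_(w : 'rV['F_2]_n | [forall i, (w ord0 i != 0) ==> (v ord0 i != 0)]) g w.

Definition hwt (n : nat) (v : 'rV['F_2]_n) : nat := #|[set i | v ord0 i != 0]|.

Definition alg_deg (n : nat) (g : 'rV['F_2]_n -> 'F_2) : nat :=
  \max_(v : 'rV['F_2]_n | anf_coef g v != 0) hwt v.

(* phi is an F_2-linear bijection from F_2^n onto F_{2^{rm}} x F_{2^m}
   (additive = F_2-linear; injective + image in L x K + cardinality => bijective) *)
Definition coord_iso (L : finFieldType) (m n : nat) (phi : 'rV['F_2]_n -> L * L) : Prop :=
  [/\ {morph phi : a b / a + b}, injective phi & forall v, inSub m (phi v).2].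

(* Main.v *)
Require Import Defs.
From HB Require Import structures.
From mathcomp Require Import all_boot all_order all_algebra all_field.
From mathcomp Require Import zify.
Import Order.TTheory GRing.Theory Num.Theory.
Local Open Scope ring_scope.


Lemma pnat2 (L : finFieldType) (L2 : 2%N \in [pchar L]) j : (GRing.pchar L).-nat (2 ^ j)%N.
Proof.
rewrite (eq_pnat _ (pcharf_eq L2)) pnatX pnat_id //.
Qed.

Lemma natr2e (L : finFieldType) (L2 : 2%N \in [pchar L]) n : ((2 * n)%:R : L) = 0.
Proof. by rewrite natrM (pcharf0 L2) mul0r. Qed.

Lemma geom_pow2 (L : finFieldType) (L2 : 2%N \in [pchar L]) (j : nat) (b : L) :
  (0 < j)%N -> (1 + b) ^+ (2 ^ j - 1) = \sum_(t < 2 ^ j) b ^+ t.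
Proof.
move=> j0.
have Fr : (1 + b) ^+ (2 ^ j) = 1 + b ^+ (2 ^ j) by rewrite exprDn_pchar ?pnat2 // expr1n.
have G : (1 + b) * \sum_(t < 2 ^ j) b ^+ t = 1 + b ^+ (2 ^ j).
  have := subrXX 1 b (2 ^ j).
  rewrite expr1n !(GRing.subr_pchar2 L2) => ->; congr (_ * _); apply: eq_bigr => i _; by rewrite expr1n mul1r.
have hj : (2 ^ j)%N = (2 * 2 ^ j.-1)%N by rewrite -expnS prednK.
case: (eqVneq (1 + b) 0) => [H|H].
  have b1 : b = 1 by apply/eqP; rewrite -(subr_eq0 b 1) (GRing.subr_pchar2 L2) addrC H.
  rewrite H expr0n /= subn_eq0 leqNgt (ltn_exp2l 0) // j0 /=.
  by rewrite b1 (eq_bigr (fun _ => 1)) ?sumr_const ?card_ord ?hj -?[1 *+ _]/((_)%:R) ?natr2e // => i _; rewrite expr1n.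
apply: (mulfI H); rewrite G -exprS -Fr; congr (_ ^+ _).
by rewrite subn1 prednK // expn_gt0.
Qed.


Lemma Gsum (L : finFieldType) (L2 : 2%N \in [pchar L]) K (w : L) :
  #|L| = (2 ^ K)%N -> (0 < K)%N ->
  \sum_(1 <= i < #|L|.-1) w ^+ i = ((w != 0) && (w != 1))%:R.
Proof.
move=> hL K0.
have hj : (2 ^ K)%N = (2 * 2 ^ K.-1)%N by rewrite -expnS prednK.
have N2 : (2 <= #|L|)%N by rewrite hL hj; have := expn_gt0 2 K.-1; lia.
case: (eqVneq w 0) => [->|w0] /=.
  rewrite big1_seq // => i /andP[_]; rewrite mem_index_iota => /andP[i1 _].
  by rewrite expr0n; case: i i1.
case: (eqVneq w 1) => [->|w1] /=.
  rewrite (eq_bigr (fun _ => 1)); last by move=> i _; rewrite expr1n.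
  rewrite sumr_const_nat -[1 *+ _]/((_)%:R).
  have -> : (#|L|.-1 - 1 = 2 * (2 ^ K.-1 - 1))%N by rewrite hL hj; have := expn_gt0 2 K.-1; lia.
  by rewrite natr2e.
have wN : w ^+ #|L|.-1 = 1.
  apply: (mulfI w0); rewrite -exprS prednK ?expf_card ?mulr1 //; lia.
have S0 : \sum_(0 <= i < #|L|.-1) w ^+ i = 0.
  have := subrXX 1 w #|L|.-1; rewrite expr1n wN subrr => /esym/eqP.
  rewrite mulf_eq0 subr_eq0 eq_sym (negbTE w1) /= => /eqP S.
  rewrite big_mkord -[RHS]S; apply: eq_bigr => i _; by rewrite expr1n mul1r.
have N1 : (0 < #|L|.-1)%N by lia.
rewrite big_ltn // expr0 in S0.
move/eqP: S0; rewrite addrC addr_eq0 => /eqP ->.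
by rewrite (oppr_pchar2 L2).
Qed.


Lemma inDeltaP (L : finFieldType) r m (a : L) k g : (0 < r * m)%N -> (k <= 2 ^ (r * m) - 2)%N ->
  inDelta r m a k g = [exists t : 'I_(2 ^ (r * m).-1), g == a ^+ (k + t)].
Proof.
move=> rm0 hk.
have hN : (2 ^ (r * m) = 2 * 2 ^ (r * m).-1)%N by rewrite -expnS prednK.
have M0 : (0 < 2 ^ (r * m).-1)%N by rewrite expn_gt0.
apply/existsP/existsP.
  case=> i /andP[/andP[ki ik] /eqP->].
  have ht : (i - k < 2 ^ (r * m).-1)%N by lia.
  by exists (Ordinal ht); rewrite /= subnKC.
case=> t /eqP->.
have hi : (k + t < 2 ^ (r * m) * 2)%N by have := ltn_ord t; lia.
exists (Ordinal hi); rewrite /= leq_addr eqxx andbT /=; have := ltn_ord t; lia.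
Qed.

Lemma prim_ne0 (L : finFieldType) (a : L) n : (0 < n)%N -> n.-primitive_root a -> a != 0.
Proof.
move=> n0 pa; apply/eqP => a0; have := prim_expr_order pa; rewrite a0 expr0n.
move: n0; rewrite lt0n => /negbTE -> /eqP; by rewrite eq_sym oner_eq0.
Qed.

Lemma Ik (L : finFieldType) (L2 : 2%N \in [pchar L]) r m (a : L) k (z : L) :
  #|L| = (2 ^ (r * m))%N -> (2 <= r * m)%N -> (#|L|.-1).-primitive_root a ->
  (k <= 2 ^ (r * m) - 2)%N ->
  \sum_(1 <= i < (2 ^ (r * m)).-1) a ^- (i * k) * (1 + a ^- i) ^+ (2 ^ (r * m).-1 - 1) * z ^+ i
  = (inDelta r m a k z)%:R.
Proof.
move=> hL rm2 pa hk.
set M := (2 ^ (r * m).-1)%N.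
have hN : (2 ^ (r * m) = 2 * M)%N by rewrite -expnS prednK //; lia.
have hM : (M = 2 * 2 ^ (r * m).-2)%N by rewrite /M -expnS; congr (2 ^ _)%N; lia.
have M0 : (0 < 2 ^ (r * m).-2)%N by rewrite expn_gt0.
have a0 : a != 0 by apply: (@prim_ne0 L a #|L|.-1 _ pa); rewrite hL hN; lia.
have an0 n : a ^+ n != 0 by rewrite expf_neq0.
have G i : (1 + a ^- i) ^+ (2 ^ (r * m).-1 - 1) = \sum_(t < M) (a ^- i) ^+ t.
  by rewrite (@geom_pow2 L L2 (r * m).-1) //; lia.
under eq_bigr => i _ do rewrite G mulr_sumr mulr_suml.
rewrite exchange_big /=.
have E t i : a ^- (i * k) * (a ^- i) ^+ t * z ^+ i = (z * (a ^+ (k + t))^-1) ^+ i.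
  rewrite -!exprVn -exprM -exprD exprMn -exprM mulrC; congr (_ * _).
  by congr (_ ^+ _); lia.
under eq_bigr => t _ do (under eq_bigr => i _ do rewrite E; rewrite -hL (@Gsum L L2 (r * m) _ hL) -?hL; last lia).
have Hw t : ((z * (a ^+ (k + t))^-1 != 0) && (z * (a ^+ (k + t))^-1 != 1)) = (z != 0) && (z != a ^+ (k + t)).
  have D (x : L) : x != 0 -> (z / x == 1) = (z == x).
    by move=> x0; rewrite -(inj_eq (mulIf x0)) divfK // mul1r.
  by rewrite mulf_eq0 invr_eq0 (negbTE (an0 _)) orbF D.
under eq_bigr => t _ do rewrite Hw.
rewrite inDeltaP //; last lia.
case: (eqVneq z 0) => [->|z0] /=.
  rewrite big1 //; case: existsP => // [[t /eqP Ht]].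
  by move: (an0 (k + t)); rewrite -Ht eqxx.
have Hb (b : bool) : ((~~ b)%:R : L) = 1 + b%:R.
  case: b => /=; last by rewrite addr0.
  by rewrite -[_ + _]/(2%:R : L) (pcharf0 L2).
under eq_bigr => t _ do rewrite Hb.
rewrite big_split /= sumr_const card_ord -[1 *+ _]/((_)%:R).
have -> : (M%:R : L) = 0 by rewrite hM natr2e.
rewrite add0r.
have inj (t t' : 'I_M) : a ^+ (k + t) = a ^+ (k + t') -> t = t'.
  move/eqP; rewrite (eq_prim_root_expr pa) eqn_modDl !modn_small ?hL ?hN; try (have := ltn_ord t; have := ltn_ord t'; lia).
  by move/eqP/val_inj.
case: existsP => [[t0 /eqP Ht0]|Hn].
  rewrite (bigD1 t0) //= Ht0 eqxx big1 ?addr0 // => t tt0.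
  case: eqP => // /inj E'; by rewrite E' eqxx in tt0.
rewrite big1 // => t _; case: eqP => // Ht; case: Hn; by exists t; apply/eqP.
Qed.


Lemma dvd_pow_sub1 a r : (0 < a)%N -> (a - 1 %| a ^ r - 1)%N.
Proof.
move=> a0; elim: r => [|r IH]; first by rewrite expn0 subnn dvdn0.
have -> : (a ^ r.+1 - 1 = (a ^ r - 1) * a + (a - 1))%N.
  rewrite expnS; have : (0 < a ^ r)%N by rewrite expn_gt0 a0.
  move: (a ^ r)%N => x; nia.
by rewrite dvdn_add // dvdn_mulr.
Qed.

Lemma sum_dvd (V : nmodType) q D (F : nat -> V) : (0 < q)%N ->
  \sum_(0 <= i < q * D | (q %| i)%N) F i = \sum_(0 <= j < D) F (q * j)%N.
Proof.
move=> q0; elim: D => [|D IH]; first by rewrite muln0 !big_geq.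
rewrite big_nat_recr //= -IH mulnS addnC (@big_cat_nat _ _ _ (q * D)) //=; last lia.
congr (_ + _); rewrite big_ltn_cond; last lia.
rewrite dvdn_mulr // big1_seq ?addr0 // => i /andP[Hq]; rewrite mem_index_iota => /andP[h1 h2].
exfalso; case/dvdnP: Hq h1 h2 => c ->.
rewrite (mulnC c) (addnC _ q) -mulnS !ltn_pmul2l //; lia.
Qed.

Lemma sum_dvd1 (V : zmodType) q D (F : nat -> V) : (0 < q)%N -> (0 < D)%N ->
  \sum_(1 <= i < q * D | (q %| i)%N) F i = \sum_(1 <= j < D) F (q * j)%N.
Proof.
move=> q0 D0; have := @sum_dvd V q D F q0.
rewrite big_ltn_cond ?muln_gt0 ?q0 // [in RHS]big_ltn // dvdn0 muln0.
by move/addrI.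
Qed.

Lemma ypow (L : finFieldType) (y : L) (u : int) q : y != 0 -> (0 < q)%N -> y ^+ q = 1 ->
  forall i : nat, (y ^ u) ^+ i = y ^+ `|((u * i%:Z) %% q%:Z)%Z|%N.
Proof.
move=> y0 q0 hq i; have yu : y \is a GRing.unit by rewrite unitfE.
have q0' : (q%:Z != 0) by rewrite eqz_nat -lt0n.
rewrite exprnP exprz_exp {1}(divz_eq (u * i%:Z) q%:Z) exprzDr // (mulrC (_ %/ _)%Z) -exprz_exp -(exprnP y q) hq exp1rz mul1r.
by rewrite [RHS]exprnP gez0_abs // modz_ge0.
Qed.

Lemma Fsupp0 (L : finFieldType) r m u (a : L) s l x : Fsupp r m u a s l x 0 = inDelta r m a l x.
Proof.
rewrite /Fsupp; case: existsP => [[y' /existsP[g /and4P[_ y0 _ /eqP[_ E]]]]|_] /=.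
  by rewrite -E eqxx in y0.
apply/existsP/idP => [[g /andP[H /eqP[->]]]|H] //; by exists x; rewrite H eqxx.
Qed.

Lemma FsuppN (L : finFieldType) r m u (a : L) s l x y : inSub m y -> y != 0 ->
  Fsupp r m u a s l x y = inDelta r m a s (x / y ^ u).
Proof.
move=> Ky y0; rewrite /Fsupp.
have yu0 : y ^ u != 0 by rewrite -unitfE unitrXz // unitfE.
rewrite [X in _ || X](_ : _ = false); last first.
  by apply/existsP => [[g /andP[_ /eqP[_ E]]]]; rewrite E eqxx in y0.
rewrite orbF; apply/existsP/idP.
  case=> y' /existsP[g /and4P[_ _ Hg /eqP[Ex Ey]]]; subst; by rewrite mulfK.
move=> H; exists y; apply/existsP; exists (x / y ^ u); by rewrite Ky y0 H /= divfK ?eqxx.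
Qed.


Lemma part1 (L : finFieldType) (L2 : 2%N \in [pchar L]) r m u (a : L) s l x y :
 (1 <= r)%N -> (3 <= m)%N -> #|L| = (2 ^ (r * m))%N -> (#|L|.-1).-primitive_root a ->
 (s <= 2 ^ (r * m) - 2)%N -> (l <= 2 ^ (r * m) - 2)%N -> inSub m y ->
 (Fsupp r m u a s l x y)%:R = bivF r m u a s l x y.
Proof.
move=> r1 m3 hL pa hs hl Ky.
have rm2 : (2 <= r * m)%N by have := leq_mul r1 m3; lia.
rewrite /bivF /=.
set q := (2 ^ m - 1)%N.
have m8 : (8 <= 2 ^ m)%N by rewrite -[8%N]/(2 ^ 3)%N leq_exp2l.
have q0 : (0 < q)%N by rewrite /q; lia.
set D := ((2 ^ (r * m)).-1 %/ q)%N.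
have hND : ((2 ^ (r * m)).-1 = q * D)%N.
  rewrite /D [(q * _)%N]mulnC divnK // /q -subn1 (mulnC r) expnM; apply: dvd_pow_sub1; lia.
have N8 : (8 <= 2 ^ (r * m))%N by rewrite -[8%N]/(2 ^ 3)%N leq_exp2l //; have := leq_mul r1 m3; lia.
have D0 : (0 < D)%N.
  have : (0 < q * D)%N by rewrite -hND; lia.
  by rewrite muln_gt0 => /andP[].
have cq (i : nat) : (`|((u * i%:Z) %% q%:Z)%Z|%N < q)%N.
  by rewrite -ltz_nat gez0_abs ?modz_ge0 ?ltz_pmod // ?eqz_nat -?lt0n // ltz_nat.
case: (eqVneq y 0) => [->|y0].
  rewrite Fsupp0.
  rewrite [X in _ = X + _ + _]big1 ?add0r; last first.
    by move=> i _; rewrite expr0n subn_eq0 leqNgt cq /= mulr0.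
  rewrite [X in _ = X + _]big1 ?add0r; last first.
    by move=> i _; rewrite expr0n eqn0Ngt q0 /= mulr0.
  under eq_bigr => i _ do rewrite expr0n eqn0Ngt q0 /= addr0 mulr1.
  by rewrite Ik //; lia.
have yq : y ^+ q = 1.
  move: Ky; rewrite /inSub (_ : (2 ^ m = q.+1)%N) ?exprS; last by rewrite /q; lia.
  by move/eqP; rewrite -[X in _ = X]mulr1 => /(mulfI y0).
rewrite FsuppN //.
rewrite [X in _ = _ + X]big1 ?addr0; last by move=> i _; rewrite yq (addrr_pchar2 L2) mulr0.
set z := x / y ^ u.
have I := @Ik L L2 r m a s z hL rm2 pa hs.
rewrite (bigID (fun i => (q %| i)%N)) /= hND sum_dvd1 // -hND in I.
rewrite -I addrC hND; congr (_ + _); apply: eq_bigr => i _.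
  symmetry; rewrite -mulrA; congr (_ * _); rewrite /z exprMn exprVn (@ypow L y u q y0 q0 yq); congr (_ * _).
  apply: (mulIf (expf_neq0 `|((u * i%:Z) %% q%:Z)%Z|%N y0)); rewrite mulVf ?expf_neq0 // -exprD subnK ?yq // ltnW //.
symmetry; rewrite yq mulr1 /z exprMn exprVn (@ypow L y u q y0 q0 yq).
by rewrite PoszM (mulrCA u) modzMr expr0 invr1 mulr1.
Qed.


Lemma prim_inj (L : finFieldType) (a : L) n i j : n.-primitive_root a -> (i < n)%N -> (j < n)%N ->
  a ^+ i = a ^+ j -> i = j.
Proof.
by move=> pa hi hj /eqP; rewrite (eq_prim_root_expr pa) !modn_small // => /eqP.
Qed.

Lemma Kchar (L : finFieldType) (a : L) m q D y :
  (2 ^ m = q.+1)%N -> #|L| = (q * D).+1 -> (q * D).-primitive_root a -> (0 < q)%N -> (0 < D)%N ->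
  (inSub m y && (y != 0)) = (y \in [set a ^+ (D * j) | j : 'I_q]).
Proof.
move=> hq hL pa q0 D0.
have a0 : a != 0 by apply: (@prim_ne0 L a (q * D)) => //; rewrite muln_gt0 q0.
apply/idP/imsetP.
  case/andP => Ky y0.
  have yq : y ^+ q = 1.
    move: Ky; rewrite /inSub hq exprS.
    by move/eqP; rewrite -[X in _ = X]mulr1 => /(mulfI y0).
  have yN : y ^+ (q * D) = 1.
    have := expf_card y; rewrite hL exprS.
    by rewrite -[X in _ = X]mulr1 => /(mulfI y0).
  case: (prim_rootP pa yN) => i Hi.
  have : (q * D %| q * i)%N by rewrite (prim_order_dvd pa) mulnC exprM -Hi yq.
  rewrite dvdn_pmul2l // => /dvdnP[j Hj].
  have jq : (j < q)%N.
    by have := ltn_ord i; rewrite Hj ltn_pmul2r.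
  by exists (Ordinal jq) => //=; rewrite Hi Hj mulnC.
case=> j _ ->.
rewrite /inSub expf_neq0 // andbT hq exprS -exprM.
have -> : (D * j * q = q * D * j)%N by lia.
by rewrite (exprM a (q * D) j) (prim_expr_order pa) expr1n mulr1.
Qed.

Lemma Kinj (L : finFieldType) (a : L) q D : (q * D).-primitive_root a ->
  injective (fun j : 'I_q => a ^+ (D * j)).
Proof.
move=> pa i j H; apply: val_inj.
have hi := ltn_ord i; have hj := ltn_ord j.
have D0 : (0 < D)%N by have := prim_order_gt0 pa; rewrite muln_gt0 => /andP[].
have := @prim_inj L a (q * D) (D * i) (D * j) pa.
rewrite !(mulnC D) !ltn_pmul2r // => /(_ hi hj).
by rewrite !(mulnC _ D) => /(_ H) /eqP; rewrite eqn_pmul2l // => /eqP.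
Qed.


Lemma sum_Kstar (L : finFieldType) (a : L) m q D (W : nmodType) (G : L -> W) :
  (2 ^ m = q.+1)%N -> #|L| = (q * D).+1 -> (q * D).-primitive_root a -> (0 < q)%N -> (0 < D)%N ->
  \sum_(y | inSub m y && (y != 0)) G y = \sum_(j < q) G (a ^+ (D * j)).
Proof.
move=> hq hL pa q0 D0.
rewrite (eq_bigl (mem [set a ^+ (D * j) | j : 'I_q])); last by move=> y; rewrite (@Kchar L a m q D y hq hL pa q0 D0).
rewrite big_imset /=; last by move=> i j _ _; apply: (@Kinj L a q D pa).
by apply: eq_bigl => j; rewrite inE.
Qed.

Lemma sum_Kpow (L : finFieldType) (a : L) m q D (u : int) :
  (2 ^ m = q.+1)%N -> #|L| = (q * D).+1 -> (q * D).-primitive_root a -> (1 < q)%N -> (0 < D)%N ->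
  coprimez u q ->
  \sum_(j < q) (a ^+ (D * j)) ^ u = 0.
Proof.
move=> hq hL pa q1 D0 cu.
have q0 : (0 < q)%N by lia.
have a0 : a != 0 by apply: (@prim_ne0 L a (q * D)) => //; rewrite muln_gt0 q0.
set b := a ^+ D.
have b0 : b != 0 by rewrite expf_neq0.
have bq : b ^+ q = 1 by rewrite /b -exprM mulnC (prim_expr_order pa).
have Ej (j : nat) : (a ^+ (D * j)) ^ u = (b ^ u) ^+ j.
  by rewrite exprM -/b !exprnP !exprz_exp mulrC.
under eq_bigr => j _ do rewrite Ej.
set c := b ^ u.
have cq : c ^+ q = 1.
  by rewrite /c (@ypow L b u q b0 q0 bq) modzMl.
have c1 : c != 1.
  rewrite /c -[b ^ u]expr1 (@ypow L b u q b0 q0 bq) mulr1 /b -exprM.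
  set t := `|(u %% q)%Z|%N.
  have tq : (t < q)%N.
    by rewrite -ltz_nat gez0_abs ?modz_ge0 ?ltz_pmod // ?eqz_nat -?lt0n // ltz_nat.
  have t0 : t != 0%N.
    apply/eqP => t0; move: t0; rewrite /t => /eqP; rewrite absz_eq0 => /eqP /dvdz_mod0P.
    rewrite dvdzE absz_nat => qu.
    move: cu; rewrite coprimezE absz_nat => cu.
    have := coprime_dvdl qu cu; rewrite /coprime gcdnn => /eqP; lia.
  rewrite -(prim_order_dvd pa); apply/negP => /dvdn_leq.
  rewrite muln_gt0 D0 lt0n t0 => /(_ isT); rewrite (mulnC D) leq_pmul2r //; lia.
have := subrXX 1 c q; rewrite expr1n cq subrr => /esym/eqP.
rewrite mulf_eq0 subr_eq0 eq_sym (negbTE c1) /= => /eqP S.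
by rewrite -[RHS]S; apply: eq_bigr => i _; rewrite expr1n mul1r.
Qed.

Lemma Dinj (L : finFieldType) (a : L) n k M (t t' : 'I_M) : n.-primitive_root a -> (M < n)%N ->
  a ^+ (k + t) = a ^+ (k + t') -> t = t'.
Proof.
move=> pa Mn /eqP; rewrite (eq_prim_root_expr pa) eqn_modDl !modn_small; try (have := ltn_ord t; have := ltn_ord t'; lia).
by move/eqP/val_inj.
Qed.

Lemma DeltaSum (L : finFieldType) r m (a : L) k (c : L) (W : nmodType) (f : L -> W) :
  #|L| = (2 ^ (r * m))%N -> (2 <= r * m)%N -> (#|L|.-1).-primitive_root a ->
  (k <= 2 ^ (r * m) - 2)%N -> c != 0 ->
  \sum_x (if inDelta r m a k (x / c) then f x else 0) = \sum_(t < 2 ^ (r * m).-1) f (a ^+ (k + t) * c).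
Proof.
move=> hL rm2 pa hk c0.
rewrite (reindex_inj (mulIf c0)) /=.
under eq_bigr => x _ do rewrite mulfK //.
rewrite -big_mkcond /=.
rewrite (eq_bigl (mem [set a ^+ (k + t) | t : 'I_(2 ^ (r * m).-1)])); last first.
  move=> g; rewrite inDeltaP /=; last lia; last lia.
  apply/existsP/imsetP => [[t /eqP->]|[t _ ->]]; by exists t.
have hN : (2 ^ (r * m) = 2 * 2 ^ (r * m).-1)%N by rewrite -expnS prednK //; lia.
have M0 : (2 <= 2 ^ (r * m).-1)%N by rewrite -[2%N]/(2 ^ 1)%N leq_exp2l //; lia.
rewrite big_imset /=; last by move=> t t' _ _ H; apply: (@Dinj L a #|L|.-1 k _ t t' pa _ H); rewrite hL hN; lia.
by apply: eq_bigl => t; rewrite inE.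
Qed.


Lemma FsuppK (L : finFieldType) r m u (a : L) s l x y : Fsupp r m u a s l x y -> inSub m y || (y == 0).
Proof.
rewrite /Fsupp => /orP[/existsP[y' /existsP[g /and4P[Ky _ _ /eqP[_ ->]]]]| /existsP[g /andP[_ /eqP[_ ->]]]];
  by rewrite ?Ky ?eqxx ?orbT.
Qed.

Lemma supp_sum (L : finFieldType) r m u (a : L) s l (W : nmodType) (h : L * L -> W) q D :
  #|L| = (2 ^ (r * m))%N -> (2 <= r * m)%N -> (#|L|.-1).-primitive_root a ->
  (s <= 2 ^ (r * m) - 2)%N -> (l <= 2 ^ (r * m) - 2)%N ->
  (2 ^ m = q.+1)%N -> #|L| = (q * D).+1 -> (0 < q)%N -> (0 < D)%N ->
  \sum_(z : L * L | Fsupp r m u a s l z.1 z.2) h z =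
    \sum_(j < q) \sum_(t < 2 ^ (r * m).-1) h (a ^+ (s + t) * (a ^+ (D * j)) ^ u, a ^+ (D * j))
    + \sum_(t < 2 ^ (r * m).-1) h (a ^+ (l + t), 0).
Proof.
move=> hL rm2 pa hs hl hq hL' q0 D0.
have pa' : (q * D).-primitive_root a by rewrite hL' in pa.
rewrite big_mkcond.
transitivity (\sum_x \sum_y (if Fsupp r m u a s l x y then h (x, y) else 0)).
  by rewrite pair_bigA; apply: eq_bigr => -[x y].
rewrite exchange_big /= (bigD1 0) //= addrC.
congr (_ + _).
  rewrite (bigID (fun y => inSub m y)) /= [X in _ + X]big1 ?addr0; last first.
    move=> y /andP[y0 Ky]; apply: big1 => x _.
    case: ifP => // /FsuppK; by rewrite (negbTE Ky) (negbTE y0).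
  rewrite (eq_bigl (fun y => inSub m y && (y != 0))); last by move=> y; rewrite andbC.
  rewrite (@sum_Kstar L a m q D W (fun y => \sum_x (if Fsupp r m u a s l x y then h (x, y) else 0)) hq hL' pa' q0 D0).
  apply: eq_bigr => j _.
  have Ky : inSub m (a ^+ (D * j)) && (a ^+ (D * j) != 0).
    by rewrite (@Kchar L a m q D _ hq hL' pa' q0 D0); apply/imsetP; exists j.
  case/andP: Ky => Ky y0.
  rewrite /=; under eq_bigr => x _ do rewrite FsuppN //.
  rewrite DeltaSum //; rewrite -unitfE unitrXz // unitfE //.
rewrite (eq_bigr (fun x => if inDelta r m a l (x / 1) then h (x, 0) else 0)); last by move=> x _; rewrite Fsupp0 divr1.
rewrite DeltaSum ?oner_eq0 //; by apply: eq_bigr => t _; rewrite mulr1.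
Qed.


Lemma F2_cases (x : 'F_2) : x = 0 \/ x = 1.
Proof. case: x => -[|[|//]] H; [left|right]; exact: val_inj. Qed.

Lemma F2add (x y : 'F_2) : (x + y != 0) = (x != 0) (+) (y != 0).
Proof. by case: (F2_cases x) => ->; case: (F2_cases y) => ->. Qed.

Lemma F2eq (x y : 'F_2) : (x != 0) = (y != 0) -> x = y.
Proof. by case: (F2_cases x) => ->; case: (F2_cases y) => ->. Qed.

Lemma pair2 (L : finFieldType) (L2 : 2%N \in [pchar L]) (z : L * L) : z + z = 0.
Proof. case: z => x y; change ((x + x, y + y) = (0, 0)); by rewrite !(addrr_pchar2 L2). Qed.

Definition lsubv k (v : 'rV['F_2]_k.+1) : 'rV['F_2]_k := \row_(i < k) v 0 (widen_ord (leqnSn k) i).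
Arguments lsubv {k} v.

Lemma lsubvD k (a b : 'rV['F_2]_k.+1) : lsubv (a + b) = lsubv a + lsubv b.
Proof. by apply/rowP => i; rewrite !mxE. Qed.

Lemma rV_ext k (a b : 'rV['F_2]_k.+1) : lsubv a = lsubv b -> a 0 ord_max = b 0 ord_max -> a = b.
Proof.
move=> H Hm; apply/rowP => i.
case: (unliftP ord_max i) => [j ->|->] //.
have -> : lift ord_max j = widen_ord (leqnSn k) j.
  by apply: val_inj; exact: lift_max.
by have := congr1 (fun v : 'rV['F_2]_k => v 0 j) H; rewrite !mxE.
Qed.

Lemma greedy (L : finFieldType) (L2 : 2%N \in [pchar L]) (S : {set L * L}) :
  (0 : L * L) \in S -> (forall x y, x \in S -> y \in S -> x + y \in S) ->
  forall k, (2 ^ k <= #|S|)%N -> exists phi : 'rV['F_2]_k -> L * L,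
    [/\ {morph phi : x y / x + y}, injective phi & forall v, phi v \in S].
Proof.
move=> S0 SD; elim=> [|k IH] Hk.
  exists (fun _ => 0); split => //; first by move=> x y; rewrite addr0.
  by move=> x y _; rewrite (thinmx0 x) (thinmx0 y).
have [phi [Hm Hi HS]] : exists phi : 'rV['F_2]_k -> L * L,
    [/\ {morph phi : x y / x + y}, injective phi & forall v, phi v \in S].
  by apply: IH; move: Hk; rewrite expnS; lia.
set Im := [set phi v | v : 'rV['F_2]_k].
have cIm : #|Im| = (2 ^ k)%N.
  by rewrite card_imset // card_mx card_Fp // mul1n.
have : ~~ (S \subset Im).
  apply/negP => /subset_leq_card; rewrite cIm; move: Hk; rewrite expnS.
  have : (0 < 2 ^ k)%N by rewrite expn_gt0. lia.
case/subsetPn => s sS sIm.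
exists (fun v => phi (lsubv v) + (if v 0 ord_max != 0 then s else 0)); split.
- move=> x y /=; rewrite lsubvD Hm mxE F2add.
  case: (x 0 ord_max != 0); case: (y 0 ord_max != 0) => /=; rewrite ?addr0 ?add0r ?(@pair2 L L2) -?addrA //.
  + by rewrite [s + _]addrC -addrA (@pair2 L L2) addr0.
  + by rewrite [s + _]addrC.
- move=> x y /=.
  case Ex: (x 0 ord_max != 0); case Ey: (y 0 ord_max != 0).
  + by move/addIr/Hi => H; apply: rV_ext => //; apply: F2eq; rewrite Ex Ey.
  + rewrite addr0 => H; exfalso; move/negP: sIm; apply; apply/imsetP; exists (lsubv x + lsubv y) => //.
    by rewrite Hm -H addrA (@pair2 L L2) add0r.
  + rewrite addr0 => H; exfalso; move/negP: sIm; apply; apply/imsetP; exists (lsubv x + lsubv y) => //.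
    by rewrite Hm H addrC addrA (@pair2 L L2) add0r.
  + by rewrite !addr0 => /Hi H; apply: rV_ext => //; apply: F2eq; rewrite Ex Ey.
- by move=> v; case: ifP => _; rewrite SD.
Qed.


Lemma inSub0 (L : finFieldType) m : inSub m (0 : L).
Proof. by rewrite /inSub expr0n expn_eq0. Qed.

Lemma inSubD (L : finFieldType) (L2 : 2%N \in [pchar L]) m (x y : L) : inSub m x -> inSub m y -> inSub m (x + y).
Proof. by rewrite /inSub exprDn_pchar ?pnat2 // => /eqP-> /eqP->. Qed.

Lemma Kset (L : finFieldType) (a : L) m q D :
  (2 ^ m = q.+1)%N -> #|L| = (q * D).+1 -> (q * D).-primitive_root a -> (0 < q)%N -> (0 < D)%N ->
  [set y : L | inSub m y] = 0 |: [set a ^+ (D * j) | j : 'I_q].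
Proof.
move=> hq hL pa q0 D0; apply/setP => y; rewrite !inE.
case: (eqVneq y 0) => [->|y0] /=; first by rewrite inSub0.
by rewrite -(@Kchar L a m q D y hq hL pa q0 D0) y0 andbT.
Qed.

Lemma cardK (L : finFieldType) (a : L) m q D :
  (2 ^ m = q.+1)%N -> #|L| = (q * D).+1 -> (q * D).-primitive_root a -> (0 < q)%N -> (0 < D)%N ->
  #|[set y : L | inSub m y]| = (2 ^ m)%N.
Proof.
move=> hq hL pa q0 D0; rewrite (@Kset L a m q D hq hL pa q0 D0) cardsU1 card_imset ?card_ord ?hq.
  by rewrite -(@Kchar L a m q D 0 hq hL pa q0 D0) eqxx andbF.
exact: (@Kinj L a q D pa).
Qed.

Lemma cardS (L : finFieldType) (a : L) r m q D :
  (2 ^ m = q.+1)%N -> #|L| = (q * D).+1 -> (q * D).-primitive_root a -> (0 < q)%N -> (0 < D)%N ->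
  #|L| = (2 ^ (r * m))%N ->
  #|[set z : L * L | inSub m z.2]| = (2 ^ ((r + 1) * m))%N.
Proof.
move=> hq hL pa q0 D0 hL2.
have -> : [set z : L * L | inSub m z.2] = setX [set: L] [set y : L | inSub m y].
  by apply/setP => -[x y]; rewrite !inE.
by rewrite cardsX cardsT (@cardK L a m q D hq hL pa q0 D0) hL2 mulnDl mul1n expnD.
Qed.

Lemma part2 (L : finFieldType) (L2 : 2%N \in [pchar L]) (a : L) r m q D :
  (2 ^ m = q.+1)%N -> #|L| = (q * D).+1 -> (q * D).-primitive_root a -> (0 < q)%N -> (0 < D)%N ->
  #|L| = (2 ^ (r * m))%N ->
  exists phi : 'rV['F_2]_((r + 1) * m) -> L * L, coord_iso m phi.
Proof.
move=> hq hL pa q0 D0 hL2.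
have S0 : (0 : L * L) \in [set z : L * L | inSub m z.2] by rewrite inE inSub0.
have SD : forall x y, x \in [set z : L * L | inSub m z.2] -> y \in [set z : L * L | inSub m z.2] -> x + y \in [set z : L * L | inSub m z.2].
  by move=> x y; rewrite !inE; apply: (@inSubD L L2).
have [|phi [Hm Hi HS]] := @greedy L L2 [set z : L * L | inSub m z.2] S0 SD ((r + 1) * m).
  by rewrite (@cardS L a r m q D hq hL pa q0 D0 hL2).
by exists phi; split => // v; move: (HS v); rewrite inE.
Qed.


Lemma part3 (L : finFieldType) (L2 : 2%N \in [pchar L]) r m u (a : L) s l q D
  (phi : 'rV['F_2]_((r + 1) * m) -> L * L) :
  #|L| = (2 ^ (r * m))%N -> (2 <= r * m)%N -> (#|L|.-1).-primitive_root a ->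
  (s <= 2 ^ (r * m) - 2)%N -> (l <= 2 ^ (r * m) - 2)%N ->
  (2 ^ m = q.+1)%N -> #|L| = (q * D).+1 -> (1 < q)%N -> (0 < D)%N -> coprimez u q ->
  coord_iso m phi ->
  alg_deg (fun v => (Fsupp r m u a s l (phi v).1 (phi v).2)%:R) = ((r + 1) * m - 1)%N.
Proof.
move=> hL2 rm2 pa hs hl hq hL q1 D0 cu [Hm Hi HK].
set n := ((r + 1) * m)%N.
have q0 : (0 < q)%N by lia.
have pa' : (q * D).-primitive_root a by rewrite hL in pa.
have F2c : 2%N \in [pchar 'F_2] by apply: pchar_Fp.
have phi0 : phi 0 = 0.
  by apply: (@addrI _ (phi 0)); rewrite -Hm !addr0.
set S := [set z : L * L | inSub m z.2].
have ImS : [set phi v | v : 'rV['F_2]_n] = S.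
  apply/eqP; rewrite eqEcard; apply/andP; split.
    by apply/subsetP => z /imsetP[v _ ->]; rewrite inE.
  by rewrite (@cardS L a r m q D hq hL pa' q0 D0 hL2) card_imset // card_mx card_Fp // mul1n.
set b := fun w => Fsupp r m u a s l (phi w).1 (phi w).2.
set A := [set w | b w].
have ImA : phi @: A = [set z : L * L | Fsupp r m u a s l z.1 z.2].
  apply/setP => z; rewrite inE; apply/imsetP/idP => [[w]|Hz]; first by rewrite inE => Hw ->.
  have : z \in S.
    rewrite inE; case/orP: (@FsuppK L r m u a s l _ _ Hz) => // /eqP ->; exact: inSub0.
  rewrite -ImS => /imsetP[w _ Ew]; exists w => //; by rewrite inE /b -Ew.
have reidx (W : nmodType) (h : L * L -> W) :
    \sum_(w in A) h (phi w) = \sum_(z : L * L | Fsupp r m u a s l z.1 z.2) h z.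
  rewrite -big_imset; last by move=> x y _ _; apply: Hi.
  by apply: eq_bigl => z; rewrite ImA inE.
have SS := fun W h => @supp_sum L r m u a s l W h q D hL2 rm2 pa hs hl hq hL q0 D0.
have hM : (2 ^ (r * m).-1 = 2 * 2 ^ (r * m).-2)%N by rewrite -expnS; congr (2 ^ _)%N; lia.
have MR : ((2 ^ (r * m).-1)%:R : L) = 0 by rewrite hM natr2e.
have cA : (#|A| %% 2 = 0)%N.
  have : (#|A|%:R : L) = 0.
    rewrite -sumr_const (reidx L (fun=> 1)) SS.
    rewrite big1 ?add0r; last by move=> j _; rewrite sumr_const card_ord MR.
    by rewrite sumr_const card_ord MR.
  rewrite -(GRing.natr_mod_pchar L2); have := ltn_pmod #|A| (isT : (0 < 2)%N).
  by case: (#|A| %% 2)%N => [|[|]] //= _ /eqP; rewrite oner_eq0.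
set g := fun v => (Fsupp r m u a s l (phi v).1 (phi v).2)%:R : 'F_2.
have tot : \sum_w g w = 0.
  rewrite (eq_bigr (fun w => if w \in A then 1 else 0)); last by move=> w _; rewrite inE /g /b; case: Fsupp.
  by rewrite -big_mkcond sumr_const -(GRing.natr_mod_pchar F2c) cA.
set sig := \sum_(w in A) w.
have sig0 : sig != 0.
  apply/negP => /eqP s0.
  have : phi sig = 0 by rewrite s0 phi0.
  rewrite /sig (big_morph phi Hm phi0) (reidx _ (fun z => z)) SS => /(congr1 fst).
  have fstD : {morph (@fst L L) : x y / x + y} by [].
  have fst0 : (0 : L * L).1 = 0 by [].
  have bf := big_morph (@fst L L) fstD fst0.
  rewrite fstD fst0 !bf /=.
  under eq_bigr => j _ do rewrite bf /=.
  rewrite exchange_big /=.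
  under eq_bigr => t _ do rewrite -mulr_sumr (@sum_Kpow L a m q D u hq hL pa' q1 D0 cu) mulr0.
  rewrite big1 // add0r.
  under eq_bigr => t _ do rewrite exprD.
  have a0 : a != 0 by apply: (@prim_ne0 L a #|L|.-1 _ pa); rewrite hL; lia.
  rewrite -mulr_sumr => /eqP; rewrite mulf_eq0 (negbTE (expf_neq0 _ a0)) /= => /eqP S0.
  set M := (2 ^ (r * m).-1)%N.
  have := subrXX 1 a M; rewrite expr1n => E.
  have : 1 - a ^+ M = 0.
    rewrite E (eq_bigr (fun i : 'I_M => a ^+ i)); first by rewrite S0 mulr0.
    by move=> i _; rewrite expr1n mul1r.
  move/eqP; rewrite subr_eq0 eq_sym -(expr0 a) (eq_prim_root_expr pa) mod0n modn_small.
    by rewrite /M expn_eq0.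
  rewrite hL2 /M; have : (2 <= 2 ^ (r * m).-1)%N by rewrite -[2%N]/(2 ^ 1)%N leq_exp2l //; lia.
  have e : (2 ^ (r * m) = 2 * 2 ^ (r * m).-1)%N by rewrite -expnS prednK //; lia.
  rewrite e; lia.
have [i0 Hi0] : exists i0, sig 0 i0 != 0.
  apply/existsP; apply: contraR sig0 => /existsPn H; apply/eqP/rowP => i.
  by move/negPn/eqP: (H i); rewrite mxE.
set v0 : 'rV['F_2]_n := \row_i (if i == i0 then 0 else 1).
have hv0 : hwt v0 = n.-1.
  rewrite /hwt -[X in _ = X.-1]card_ord -(cardsC1 i0); apply: eq_card => i; rewrite !inE mxE.
  by case: (i == i0).
have anf_all (v : 'rV['F_2]_n) : [forall i, v 0 i != 0] -> anf_coef g v = 0.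
  move=> /forallP Hv; rewrite /anf_coef -[RHS]tot; apply: eq_bigl => w.
  by apply/forallP => i; rewrite Hv implybT.
have anf0 : anf_coef g v0 = sig 0 i0.
  rewrite /anf_coef (eq_bigl (fun w : 'rV['F_2]_n => w 0 i0 == 0)); last first.
    move=> w; apply/forallP/eqP => [/(_ i0)|H i]; first by rewrite mxE eqxx implybF => /negPn/eqP.
    rewrite mxE; case: (eqVneq i i0) => [->|_]; first by rewrite H eqxx.
    by rewrite implybT.
  have := tot; rewrite (bigID (fun w : 'rV['F_2]_n => w 0 i0 == 0)) /= => /eqP; rewrite addr_eq0 => /eqP ->.
  rewrite (oppr_pchar2 F2c) /sig summxE.
  rewrite big_mkcond [RHS]big_mkcond; apply: eq_bigr => w _ /=.
  rewrite /g inE /b; case: (F2_cases (w 0 i0)) => ->; case: Fsupp => //=.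
have degle : (alg_deg g <= n.-1)%N.
  apply/bigmax_leqP => v Hv.
  case: (boolP [forall i, v 0 i != 0]) => [H|/forallPn [i /negPn /eqP Hi0']].
    by rewrite anf_all ?eqxx in Hv.
  rewrite /hwt -[X in (_ <= X.-1)%N]card_ord -(cardsC1 i); apply: subset_leq_card; apply/subsetP => j.
  rewrite !inE; apply: contraNneq => ->; by rewrite Hi0'.
have degge : (n.-1 <= alg_deg g)%N.
  by rewrite -hv0; apply: leq_bigmax_cond; rewrite anf0.
by apply/eqP; rewrite subn1 eqn_leq degle degge.
Qed.


Theorem theorem4 (L : finFieldType) (r m : nat) (u : int) (alpha : L) (s l : nat) :
  odd r -> (1 <= r)%N -> (3 <= m)%N ->
  #|L| = (2 ^ (r * m))%N ->
  coprimez u (2 ^ m - 1)%N ->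
  (#|L|.-1).-primitive_root alpha ->
  (s <= 2 ^ (r * m) - 2)%N -> (l <= 2 ^ (r * m) - 2)%N ->
  (forall x y : L, inSub m y ->
     (Fsupp r m u alpha s l x y)%:R = bivF r m u alpha s l x y)
  /\ (exists phi : 'rV['F_2]_((r + 1) * m) -> L * L, coord_iso m phi)
  /\ (forall phi : 'rV['F_2]_((r + 1) * m) -> L * L, coord_iso m phi ->
        alg_deg (fun v => (Fsupp r m u alpha s l (phi v).1 (phi v).2)%:R)
        = ((r + 1) * m - 1)%N).
Proof.
move=> _ r1 m3 hL2 cu pa hs hl.
have L2 : 2%N \in [pchar L] by apply: (card_finPcharP hL2).
have rm2 : (2 <= r * m)%N by have := leq_mul r1 m3; lia.
set q := (2 ^ m - 1)%N.
have m8 : (8 <= 2 ^ m)%N by rewrite -[8%N]/(2 ^ 3)%N leq_exp2l.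
have q1 : (1 < q)%N by rewrite /q; lia.
have hq : (2 ^ m = q.+1)%N by rewrite /q; lia.
set D := (#|L|.-1 %/ q)%N.
have N8 : (8 <= 2 ^ (r * m))%N by rewrite -[8%N]/(2 ^ 3)%N leq_exp2l //; have := leq_mul r1 m3; lia.
have hND : (#|L|.-1 = q * D)%N.
  rewrite /D [(q * _)%N]mulnC divnK // hL2 /q -subn1 (mulnC r) expnM; apply: dvd_pow_sub1; lia.
have hL : #|L| = (q * D).+1 by rewrite -hND hL2; lia.
have D0 : (0 < D)%N.
  have : (0 < q * D)%N by rewrite -hND hL2; lia.
  by rewrite muln_gt0 => /andP[].
have pa' : (q * D).-primitive_root alpha by rewrite -hND.
split; [|split].
- by move=> x y Ky; apply: (@part1 L L2 r m u alpha s l x y r1 m3 hL2 pa hs hl Ky).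
- exact: (@part2 L L2 alpha r m q D hq hL pa' (ltnW q1) D0 hL2).
- move=> phi Hphi.
  exact: (@part3 L L2 r m u alpha s l q D phi hL2 rm2 pa hs hl hq hL q1 D0 cu Hphi).
Qed.
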